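(* Let $A$ be a bialgebra over a commutative ring $\Bbbk$ with product $\mu$, unit $1_A$, coproduct $\Delta a=a^{(1)}\otimes a^{(2)}$ and counit $\varepsilon$. Let $\mathcal{O}^A$ be the operad with multiplication with $\mathcal{O}^A(n)=\mathrm{Hom}_\Bbbk(A^{\otimes n},\Bbbk)$, partial compositions, for $f\in\mathcal{O}^A(m)$, $g\in\mathcal{O}^A(n)$, $$(f\circ_i g)(a_1\otimes\dots\otimes a_{m+n-1})=f\big(a_1\otimes\dots\otimes a_{i-1}\otimes a_i^{(1)}\cdots a_{i+n-1}^{(1)}\,g(a_i^{(2)}\otimes\dots\otimes a_{i+n-1}^{(2)})\otimes a_{i+n}\otimes\dots\otimes a_{m+n-1}\big),$$ identity $\varepsilon$, multiplication $\varepsilon\circ\mu$ and $e=\mathrm{id}_\Bbbk$; its cochain complex is the dual $(BA)^\vee$ of the bar construction, with cohomology $\mathrm{Ext}^*_A(\Bbbk,\Bbbk)$, which thus carries a Gerstenhaber algebra structure. Let $\mathcal{E}nd(A)$ be the operad with multiplication $\mathcal{E}nd(A)(n)=\mathrm{Hom}_\Bbbk(A^{\otimes n},A)$, $\gamma(f;g_1,\dots,g_n)=f\circ(g_1\otimes\dots\otimes g_n)$, identity $\mathrm{id}_A$, multiplication $\mu$, $e$ the unit $\Bbbk\to A$; its cochain complex is the Hochschild cochain complex $\mathcal{C}^*(A,A)$, so $HH^*(A,A)$ is a Gerstenhaber algebra. Then the maps $lift:\mathrm{Hom}(A^{\otimes n},\Bbbk)\to\mathrm{Hom}(A^{\otimes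 n},A)$, $lift(f)(a_1\otimes\dots\otimes a_n)=a_1^{(1)}\cdots a_n^{(1)}f(a_1^{(2)}\otimes\dots\otimes a_n^{(2)})$, induce an injective morphism of Gerstenhaber algebras $\mathrm{Ext}^*_A(\Bbbk,\Bbbk)\hookrightarrow HH^*(A,A)$; i.e. $\mathrm{Ext}^*_A(\Bbbk,\Bbbk)$ is a sub Gerstenhaber algebra of $HH^*(A,A)$.
   Context: A (non-symmetric, $\Bbbk$-linear) operad $O$ consists of $\Bbbk$-modules $O(n)$, $n\ge0$, an identity $id\in O(1)$ and associative unital partial compositions $\circ_i:O(m)\otimes O(n)\to O(m+n-1)$. An operad with multiplication has $\mu\in O(2)$, $e\in O(0)$ with $\mu\circ_1\mu=\mu\circ_2\mu$, $\mu\circ_1e=id=\mu\circ_2e$. Its cochain complex $\mathcal{C}^*(O)$: $O(n)$ in degree $n$, $df=\mu\circ_2f+\sum_{i=1}^n(-1)^if\circ_i\mu+(-1)^{n+1}\mu\circ_1f$. Cup product $f\cup g=(\mu\circ_1f)\circ_{m+1}g$ and bracket $\{f,g\}=f\bar\circ g-(-1)^{(m-1)(n-1)}g\bar\circ f$, $f\bar\circ g=(-1)^{(m-1)(n-1)}\sum_{i=1}^m(-1)^{(n-1)(i-1)}f\circ_ig$, make $H(\mathcal{C}^*(O))$ a Gerstenhaber algebra; morphisms of operads with multiplication induce morphisms of Gerstenhaber algebras. *)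

(* Defs.v *)
From HB Require Import structures.
From mathcomp Require Import all_boot all_order all_algebra.
Set Implicit Arguments. Unset Strict Implicit. Unset Printing Implicit Defensive.
Import Order.TTheory GRing.Theory.
Local Open Scope ring_scope.

(* An element of O(n) is represented by a function on lists (of length n)   *)
(* of "inputs"; only its values on lists of length n matter.                *)

Record opmul (T : Type) (M : zmodType) := OpMul {
  (* ocomp m n i f g = f o_i g, for f of arity m, g of arity n, 1 <= i <= m *)
  ocomp : nat -> nat -> nat -> (seq T -> M) -> (seq T -> M) -> (seq T -> M);
  oid : seq T -> M;   (* identity, arity 1 *)
  omu : seq T -> M;   (* multiplication, arity 2 *)
  oe  : seq T -> M    (* e, arity 0 *)
}.

Section Cochains.
Variables (T : Type) (M : zmodType) (O : opmul T M).

Definition sgn (k : nat) (x : M) : M := if odd k then - x else x.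

Definition fadd (f g : seq T -> M) : seq T -> M := fun s => f s + g s.
Definition fsub (f g : seq T -> M) : seq T -> M := fun s => f s - g s.
Definition fzero : seq T -> M := fun _ => 0.

Definition odiff (n : nat) (f : seq T -> M) : seq T -> M := fun s =>
  ocomp O 2 n 2 (omu O) f s
  + \sum_(1 <= i < n.+1) sgn i (ocomp O n 2 i f (omu O) s)
  + sgn n.+1 (ocomp O 2 n 1 (omu O) f s).

Definition ocup (m n : nat) (f g : seq T -> M) : seq T -> M :=
  ocomp O m.+1 n m.+1 (ocomp O 2 m 1 (omu O) f) g.

(* f bar-o g = (-1)^((m-1)(n-1)) sum_{i=1}^m (-1)^((n-1)(i-1)) f o_i g.
   Signs are taken with integer exponents: (m-1)(n-1) has the parity of
   (m+1)(n+1), and (n-1)(i-1) that of (n+1)(i+1). *)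
Definition obarcomp (m n : nat) (f g : seq T -> M) : seq T -> M := fun s =>
  sgn (m.+1 * n.+1)
    (\sum_(1 <= i < m.+1) sgn (n.+1 * i.+1) (ocomp O m n i f g s)).

Definition obracket (m n : nat) (f g : seq T -> M) : seq T -> M := fun s =>
  obarcomp m n f g s - sgn (m.+1 * n.+1) (obarcomp n m g f s).

Definition eqdeg (n : nat) (f g : seq T -> M) : Prop :=
  forall s : seq T, size s = n -> f s = g s.

End Cochains.

(* Hom_R(A^{(x)n}, M) is represented (universal property of the tensor      *)
(* power) by the R-multilinear maps of n arguments, i.e. functions on lists *)
(* of length n which are linear in each argument.                            *)
(* The coproduct is given in Sweedler form: Delta a = sum_{p in cop a}       *)
(* p.1 (x) p.2.  Identities in A^{(x)k} are expressed through the universal  *)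
(* property: after applying an arbitrary k-linear map into an arbitrary     *)
(* R-module.                                                                 *)

Section Bialgebra.
Variables (R : comPzRingType) (A : algType R).

Definition multilin (M : lmodType R) (n : nat) (f : seq A -> M) : Prop :=
  forall (s t : seq A) (x : R) (a b : A), (size s + size t).+1 = n ->
    f (s ++ (x *: a + b) :: t) = x *: f (s ++ a :: t) + f (s ++ b :: t).

Definition bilin (M : lmodType R) (phi : A -> A -> M) : Prop :=
  multilin 2 (fun s => phi (nth 0 s 0) (nth 0 s 1)).

Definition trilin (M : lmodType R) (psi : A -> A -> A -> M) : Prop :=
  multilin 3 (fun s => psi (nth 0 s 0) (nth 0 s 1) (nth 0 s 2)).

Definition swe (cop : A -> seq (A * A)) (M : lmodType R) (phi : A -> A -> M)
  (a : A) : M := \sum_(p <- cop a) phi p.1 p.2.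

Definition is_bialgebra (cop : A -> seq (A * A)) (eps : A -> R) : Prop :=
      (forall (x : R) (a b : A), eps (x *: a + b) = x * eps a + eps b) /\
      (forall a b : A, eps (a * b) = eps a * eps b) /\
      eps 1 = 1 /\
      (forall (M : lmodType R) (phi : A -> A -> M), bilin phi ->
         forall (x : R) (a b : A),
           swe cop phi (x *: a + b) = x *: swe cop phi a + swe cop phi b) /\
      (forall (M : lmodType R) (psi : A -> A -> A -> M), trilin psi ->
         forall a : A,
           \sum_(p <- cop a) \sum_(q <- cop p.1) psi q.1 q.2 p.2
           = \sum_(p <- cop a) \sum_(q <- cop p.2) psi p.1 q.1 q.2) /\
      (forall a : A, \sum_(p <- cop a) eps p.1 *: p.2 = a) /\
      (forall a : A, \sum_(p <- cop a) eps p.2 *: p.1 = a) /\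
      (forall (M : lmodType R) (phi : A -> A -> M), bilin phi ->
         (forall a b : A, swe cop phi (a * b)
            = \sum_(p <- cop a) \sum_(q <- cop b) phi (p.1 * q.1) (p.2 * q.2))
         /\ swe cop phi 1 = phi 1 1).

Variables (cop : A -> seq (A * A)) (eps : A -> R).

(* Sweedler expansion of Delta^{(x)k}(a_1 (x) ... (x) a_k) *)
Fixpoint combos (s : seq A) : seq (seq (A * A)) :=
  match s with
  | [::] => [:: [::]]
  | a :: s' => [seq p :: ps | p <- cop a, ps <- combos s']
  end.

Definition firsts_prod (ps : seq (A * A)) : A := \prod_(p <- ps) p.1.

Definition OA_comp (m n i : nat) (f g : seq A -> R^o) : seq A -> R^o :=
  fun s =>
    let pre := take i.-1 s in
    let mid := take n (drop i.-1 s) in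
    let post := drop (i.-1 + n) s in
    \sum_(ps <- combos mid)
       f (pre ++ (g (map snd ps) *: firsts_prod ps) :: post).

Definition OA : opmul A R^o :=
  @OpMul A R^o OA_comp
    (fun s => eps (nth 0 s 0))
    (fun s => eps (nth 0 s 0 * nth 0 s 1))
    (fun _ => 1).

Definition End_comp (m n i : nat) (f g : seq A -> A) : seq A -> A :=
  fun s => f (take i.-1 s ++ g (take n (drop i.-1 s)) :: drop (i.-1 + n) s).

Definition EndA : opmul A A :=
  @OpMul A A End_comp
    (fun s => nth 0 s 0)
    (fun s => nth 0 s 0 * nth 0 s 1)
    (fun _ => 1).

Definition bilift (f : seq A -> R^o) : seq A -> A :=
  fun s => \sum_(ps <- combos s) f (map snd ps) *: firsts_prod ps.

End Bialgebra.

Definition cocycle (R : comPzRingType) (A : algType R) (M : lmodType R)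
  (O : opmul A M) (n : nat) (f : seq A -> M) : Prop :=
  multilin n f /\ eqdeg n.+1 (odiff O n f) (@fzero A M).

Definition coboundary (R : comPzRingType) (A : algType R) (M : lmodType R)
  (O : opmul A M) (n : nat) (f : seq A -> M) : Prop :=
  match n with
  | 0 => eqdeg 0 f (@fzero A M)
  | n'.+1 => exists h : seq A -> M, multilin n' h /\ eqdeg n f (odiff O n' h)
  end.

(* Main.v *)
Require Import Defs.
From HB Require Import structures.
From mathcomp Require Import all_boot all_order all_algebra.
From mathcomp Require Import zify.
Set Implicit Arguments. Unset Strict Implicit. Unset Printing Implicit Defensive.
Import GRing.Theory.
Local Open Scope ring_scope.

Section Main.
Variables (R : comPzRingType) (A : algType R) (cop : A -> seq (A * A)) (eps : A -> R).
Hypothesis Hbi : is_bialgebra cop eps.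

Definition linF (M : lmodType R) (F : A -> M) :=
  forall (x : R) (a b : A), F (x *: a + b) = x *: F a + F b.

Section LinF.
Variables (M : lmodType R) (F : A -> M) (HF : linF F).
Lemma linF0 : F 0 = 0.
Proof. have := HF 1 0 0; rewrite scale1r addr0 scale1r => H; apply: (addrI (F 0)); by rewrite addr0 -H. Qed.
Lemma linFD a b : F (a + b) = F a + F b.
Proof. by have := HF 1 a b; rewrite !scale1r. Qed.
Lemma linFZ x a : F (x *: a) = x *: F a.
Proof. by rewrite -[x *: a]addr0 HF linF0 addr0. Qed.
Lemma linFN a : F (- a) = - F a.
Proof. by rewrite -[- a]scaleN1r linFZ scaleN1r. Qed.
Lemma linF_sum (I : Type) (r : seq I) (G : I -> A) :
  F (\sum_(i <- r) G i) = \sum_(i <- r) F (G i).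
Proof. elim: r => [|i r IH]; rewrite ?big_nil ?linF0 // !big_cons linFD IH //. Qed.
End LinF.

Lemma linF_add (M : lmodType R) (F G : A -> M) : linF F -> linF G -> linF (fun a => F a + G a).
Proof. move=> HF HG x a b; rewrite HF HG scalerDr; by rewrite addrACA. Qed.

Lemma linF_scale (M : lmodType R) (F : A -> M) (c : R) : linF F -> linF (fun a => c *: F a).
Proof. move=> HF x a b; by rewrite HF scalerDr !scalerA mulrC. Qed.

Lemma linF_sum_mem (M : lmodType R) (I : eqType) (r : seq I) (F : I -> A -> M) :
  (forall i, i \in r -> linF (F i)) -> linF (fun a => \sum_(i <- r) F i a).
Proof.
elim: r => [|i r IH] H x a b.
  by rewrite !big_nil scaler0 addr0.
rewrite !big_cons H ?mem_head // IH; last by move=> j Hj; apply: H; rewrite inE Hj orbT.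
by rewrite scalerDr addrACA.
Qed.

Lemma linF_sum_gen (M : lmodType R) (I : Type) (r : seq I) (F : I -> A -> M) :
  (forall i, linF (F i)) -> linF (fun a => \sum_(i <- r) F i a).
Proof.
elim: r => [|i r IH] H x a b.
  by rewrite !big_nil scaler0 addr0.
by rewrite !big_cons H IH // scalerDr addrACA.
Qed.

Lemma bilinP (M : lmodType R) (phi : A -> A -> M) :
  (forall v, linF (phi ^~ v)) -> (forall u, linF (phi u)) -> bilin phi.
Proof.
move=> H1 H2 s t x a b.
case: s => [|u [|? ?]] /=; case: t => [|v [|? ?]] //= _; by rewrite ?H1 ?H2.
Qed.

Lemma trilinP (M : lmodType R) (psi : A -> A -> A -> M) :
  (forall v w, linF (fun u => psi u v w)) -> (forall u w, linF (fun v => psi u v w)) ->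
  (forall u v, linF (psi u v)) -> trilin psi.
Proof.
move=> H1 H2 H3 s t x a b.
case: s => [|u [|v [|? ?]]] /=; case: t => [|v' [|w [|? ?]]] //= _;
  by rewrite ?H1 ?H2 ?H3.
Qed.

Lemma bilin1 (M : lmodType R) (phi : A -> A -> M) : bilin phi -> forall v, linF (phi ^~ v).
Proof. move=> H v x a b; exact: (H [::] [:: v]). Qed.
Lemma bilin2 (M : lmodType R) (phi : A -> A -> M) : bilin phi -> forall u, linF (phi u).
Proof. move=> H u x a b; exact: (H [:: u] [::]). Qed.

Lemma eps_lin : linF (M := R^o) eps.
Proof. by case: Hbi. Qed.
Lemma epsM a b : eps (a * b) = eps a * eps b.
Proof. by case: Hbi => _ []. Qed.
Lemma eps1 : eps 1 = 1.
Proof. by case: Hbi => _ [] _ []. Qed.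
Lemma swe_lin (M : lmodType R) (phi : A -> A -> M) : bilin phi -> linF (swe cop phi).
Proof. by case: Hbi => _ [] _ [] _ [] H _ Hp; apply: H. Qed.
Lemma coassoc (M : lmodType R) (psi : A -> A -> A -> M) : trilin psi -> forall a : A,
           \sum_(p <- cop a) \sum_(q <- cop p.1) psi q.1 q.2 p.2
           = \sum_(p <- cop a) \sum_(q <- cop p.2) psi p.1 q.1 q.2.
Proof. by case: Hbi => _ [] _ [] _ [] _ [] H _; apply: H. Qed.
Lemma counitl a : \sum_(p <- cop a) eps p.1 *: p.2 = a.
Proof. by case: Hbi => _ [] _ [] _ [] _ [] _ []. Qed.
Lemma counitr a : \sum_(p <- cop a) eps p.2 *: p.1 = a.
Proof. by case: Hbi => _ [] _ [] _ [] _ [] _ [] _ []. Qed.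
Lemma swe_mul (M : lmodType R) (phi : A -> A -> M) : bilin phi -> forall a b : A, swe cop phi (a * b)
            = \sum_(p <- cop a) \sum_(q <- cop b) phi (p.1 * q.1) (p.2 * q.2).
Proof. by case: Hbi => _ [] _ [] _ [] _ [] _ [] _ [] _ H Hp; case: (H _ _ Hp). Qed.
Lemma swe_one (M : lmodType R) (phi : A -> A -> M) : bilin phi -> swe cop phi 1 = phi 1 1.
Proof. by case: Hbi => _ [] _ [] _ [] _ [] _ [] _ [] _ H Hp; case: (H _ _ Hp). Qed.


Definition secs_prod (ps : seq (A * A)) : A := \prod_(p <- ps) p.2.

Lemma big_combos_cons (M : zmodType) (F : seq (A * A) -> M) a s :
  \sum_(ps <- combos cop (a :: s)) F ps = \sum_(p <- cop a) \sum_(ps <- combos cop s) F (p :: ps).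
Proof. by rewrite /= big_allpairs_dep. Qed.

Lemma big_combos_nil (M : zmodType) (F : seq (A * A) -> M) :
  \sum_(ps <- combos cop [::]) F ps = F [::].
Proof. by rewrite /= big_cons big_nil addr0. Qed.

Lemma big_combos_cat (M : zmodType) (F : seq (A * A) -> M) s t :
  \sum_(ps <- combos cop (s ++ t)) F ps =
  \sum_(p1 <- combos cop s) \sum_(p2 <- combos cop t) F (p1 ++ p2).
Proof.
elim: s F => [|a s IH] F /=; first by rewrite big_combos_nil.
rewrite big_combos_cons big_combos_cons; apply: eq_bigr => p _.
by rewrite IH.
Qed.

Lemma eq_combos (M : zmodType) (F G : seq (A * A) -> M) s :
  (forall ps, size ps = size s -> F ps = G ps) ->
  \sum_(ps <- combos cop s) F ps = \sum_(ps <- combos cop s) G ps.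
Proof.
elim: s F G => [|a s IH] F G H; first by rewrite !big_combos_nil H.
rewrite !big_combos_cons; apply: eq_bigr => p _; apply: IH => ps Hs.
by apply: H; rewrite /= Hs.
Qed.

Lemma linF_combos (M : lmodType R) (F : seq (A * A) -> A -> M) s :
  (forall ps, size ps = size s -> linF (F ps)) ->
  linF (fun a => \sum_(ps <- combos cop s) F ps a).
Proof.
elim: s F => [|b s IH] F H.
  move=> x a c; rewrite !big_combos_nil; exact: H.
move=> x a c; rewrite !big_combos_cons.
apply: (@linF_sum_gen _ _ _ (fun p a => \sum_(ps <- combos cop s) F (p :: ps) a)) => p.
apply: IH => ps Hs; apply: H; by rewrite /= Hs.
Qed.

Lemma firsts_cons (p : A * A) ps : firsts_prod (p :: ps) = p.1 * firsts_prod ps.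
Proof. by rewrite /firsts_prod big_cons. Qed.
Lemma secs_cons (p : A * A) ps : secs_prod (p :: ps) = p.2 * secs_prod ps.
Proof. by rewrite /secs_prod big_cons. Qed.
Lemma firsts_cat (p1 p2 : seq (A * A)) : firsts_prod (p1 ++ p2) = firsts_prod p1 * firsts_prod p2.
Proof. by rewrite /firsts_prod big_cat. Qed.
Lemma firsts_nil : firsts_prod ([::] : seq (A * A)) = 1.
Proof. by rewrite /firsts_prod big_nil. Qed.
Lemma secs_nil : secs_prod [::] = 1.
Proof. by rewrite /secs_prod big_nil. Qed.

Lemma swe0 (M : lmodType R) (phi : A -> A -> M) : bilin phi -> swe cop phi 0 = 0.
Proof. move=> H; exact: (linF0 (swe_lin H)). Qed.

Lemma swe_prod (M : lmodType R) (l : seq A) (phi : A -> A -> M) : bilin phi ->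
  swe cop phi (\prod_(a <- l) a) =
  \sum_(ps <- combos cop l) phi (firsts_prod ps) (secs_prod ps).
Proof.
elim: l phi => [|a l IH] phi Hphi.
  by rewrite big_nil swe_one // big_combos_nil firsts_nil secs_nil.
rewrite big_cons swe_mul // big_combos_cons; apply: eq_bigr => p _.
have Hb : bilin (fun u v => phi (p.1 * u) (p.2 * v)).
  apply: bilinP => [v|u] x b c.
    by rewrite mulrDr -scalerAr (bilin1 Hphi).
  by rewrite mulrDr -scalerAr (bilin2 Hphi).
have := IH _ Hb; rewrite /swe => ->.
by apply: eq_bigr => ps _; rewrite firsts_cons secs_cons.
Qed.


Definition cond3 (M : lmodType R) (Psi : seq A -> seq A -> seq A -> M) (k : nat) :=
  [/\ (forall X1 X2 Y Z, (size X1 + size X2).+1 = k -> size Y = k -> size Z = k ->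
         linF (fun x => Psi (X1 ++ x :: X2) Y Z)),
      (forall X Y1 Y2 Z, size X = k -> (size Y1 + size Y2).+1 = k -> size Z = k ->
         linF (fun y => Psi X (Y1 ++ y :: Y2) Z)) &
      (forall X Y Z1 Z2, size X = k -> size Y = k -> (size Z1 + size Z2).+1 = k ->
         linF (fun z => Psi X Y (Z1 ++ z :: Z2)))].

Lemma coassoc_list (M : lmodType R) (l : seq A) (Psi : seq A -> seq A -> seq A -> M) :
  cond3 Psi (size l) ->
  \sum_(p <- combos cop l) \sum_(q <- combos cop (map fst p))
      Psi (map fst q) (map snd q) (map snd p)
  = \sum_(p <- combos cop l) \sum_(q <- combos cop (map snd p))
      Psi (map fst p) (map fst q) (map snd q).
Proof.
elim: l Psi => [|a l IH] Psi HPsi.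
  by rewrite /= !big_seq1.
case: HPsi => H1 H2 H3.
pose Phi' x y z := \sum_(ps <- combos cop l) \sum_(qs <- combos cop (map snd ps))
      Psi (x :: map fst ps) (y :: map fst qs) (z :: map snd qs).
have E1 : forall x y z, \sum_(ps <- combos cop l) \sum_(qs <- combos cop (map fst ps))
      Psi (x :: map fst qs) (y :: map snd qs) (z :: map snd ps) = Phi' x y z.
  move=> x y z; apply: (IH (fun X Y Z => Psi (x :: X) (y :: Y) (z :: Z))).
  split.
  - move=> X1 X2 Y Z HX HY HZ; apply: (H1 (x :: X1) X2 (y :: Y) (z :: Z)); by rewrite /= ?addSn ?HX ?HY ?HZ.
  - move=> X Y1 Y2 Z HX HY HZ; apply: (H2 (x :: X) (y :: Y1) Y2 (z :: Z)); by rewrite /= ?addSn ?HX ?HY ?HZ.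
  - move=> X Y Z1 Z2 HX HY HZ; apply: (H3 (x :: X) (y :: Y) (z :: Z1) Z2); by rewrite /= ?addSn ?HX ?HY ?HZ.
have Htri : trilin Phi'.
  apply: trilinP => [v w|u w|u v].
  - apply: linF_combos => ps Hps; apply: linF_combos => qs Hqs.
    apply: (H1 [::]); by rewrite /= ?size_map ?Hqs ?size_map ?Hps.
  - apply: linF_combos => ps Hps; apply: linF_combos => qs Hqs.
    apply: (H2 _ [::]); by rewrite /= ?size_map ?Hqs ?size_map ?Hps.
  - apply: linF_combos => ps Hps; apply: linF_combos => qs Hqs.
    apply: (H3 _ _ [::]); by rewrite /= ?size_map ?Hqs ?size_map ?Hps.
transitivity (\sum_(p <- cop a) \sum_(q <- cop p.1) Phi' q.1 q.2 p.2).
  rewrite big_combos_cons; apply: eq_bigr => p _.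
  rewrite -(eq_bigr _ (fun q _ => E1 q.1 q.2 p.2)) exchange_big /=.
  apply: eq_bigr => ps _; by rewrite big_combos_cons.
rewrite coassoc // big_combos_cons; apply: eq_bigr => p _.
rewrite /Phi' exchange_big /=; apply: eq_bigr => ps _; by rewrite big_combos_cons.
Qed.


Lemma linF_combos_at (M : lmodType R) (s t : seq A) (Psi : seq (A * A) -> M) :
  (forall p1 p3, size p1 = size s -> size p3 = size t ->
     bilin (fun u v => Psi (p1 ++ (u, v) :: p3))) ->
  linF (fun a => \sum_(ps <- combos cop (s ++ a :: t)) Psi ps).
Proof.
move=> H.
pose phi p1 u v := \sum_(p3 <- combos cop t) Psi (p1 ++ (u, v) :: p3).
have E : forall a, \sum_(ps <- combos cop (s ++ a :: t)) Psi ps =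
    \sum_(p1 <- combos cop s) swe cop (phi p1) a.
  move=> a; rewrite big_combos_cat; apply: eq_bigr => p1 _.
  rewrite big_combos_cons /swe; apply: eq_bigr => [[u v]] _ //.
move=> x a b; rewrite !E.
apply: (@linF_combos _ (fun p1 a => swe cop (phi p1) a)) => p1 Hp1.
apply: swe_lin; apply: bilinP => [v|u].
  apply: linF_combos => p3 Hp3; exact: (bilin1 (H _ _ Hp1 Hp3)).
apply: linF_combos => p3 Hp3; exact: (bilin2 (H _ _ Hp1 Hp3)).
Qed.

Lemma multilin_lin (M : lmodType R) n (F : seq A -> M) s t :
  multilin n F -> (size s + size t).+1 = n -> linF (fun a => F (s ++ a :: t)).
Proof. move=> H Hn x a b; exact: H. Qed.

Lemma L_multilin n (f : seq A -> R^o) : multilin n f -> multilin n (bilift cop f).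
Proof.
move=> Hf s t x a b Hn; rewrite /bilift.
apply: (linF_combos_at (Psi := fun ps => f (map snd ps) *: firsts_prod ps)) => p1 p3 H1 H3.
apply: bilinP => [v|u] y c d.
  rewrite !firsts_cat !firsts_cons !map_cat /= mulrDl mulrDr -scalerAl -scalerAr !scalerDr.
  by rewrite !scalerA mulrC.
rewrite !firsts_cat !firsts_cons !map_cat /=.
rewrite (multilin_lin Hf) ?size_map ?H1 ?H3 //.
by rewrite scalerDl -scalerA.
Qed.

Lemma counit_list (M : lmodType R) (s : seq A) (F : seq A -> M) :
  multilin (size s) F ->
  \sum_(ps <- combos cop s) eps (firsts_prod ps) *: F (map snd ps) = F s.
Proof.
elim: s F => [|a s IH] F HF.
  by rewrite big_combos_nil firsts_nil eps1 scale1r.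
rewrite big_combos_cons.
have HF0 : linF (fun v => F (v :: s)) by exact: (multilin_lin (s := [::]) (t := s) HF (erefl _)).
transitivity (\sum_(p <- cop a) eps p.1 *: F (p.2 :: s)).
  apply: eq_bigr => p _.
  have HF' : multilin (size s) (fun t => F (p.2 :: t)).
    move=> s1 t1 x b c Hn; apply: (HF (p.2 :: s1)); by rewrite /= addSn Hn.
  have := IH _ HF'; rewrite /= => <-.
  rewrite scaler_sumr; apply: eq_bigr => ps _.
  by rewrite firsts_cons epsM scalerA.
rewrite -{2}(counitl a) (linF_sum HF0); apply: eq_bigr => p _.
by rewrite (linFZ HF0).
Qed.


Notation L := (bilift cop).
Notation OO := (OA cop eps).
Notation EE := (EndA A).

Lemma mu_multilin : multilin 2 (omu OO).
Proof.
change (bilin (M := R^o) (fun u v => eps (u * v))).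
apply: bilinP => [v|u] x a b.
  by rewrite mulrDl -scalerAl eps_lin.
by rewrite mulrDr -scalerAr eps_lin.
Qed.

Lemma L_mu s : size s = 2 -> L (omu OO) s = omu EE s.
Proof.
case: s => [|a [|b [|? ?]]] // _.
change (L (omu OO) [:: a; b] = a * b); rewrite /bilift big_combos_cons.
rewrite -{2}(counitr a) -{2}(counitr b) mulr_suml; apply: eq_bigr => p _.
rewrite big_combos_cons mulr_sumr; apply: eq_bigr => q _.
rewrite big_combos_nil /= !firsts_cons firsts_nil mulr1 epsM.
by rewrite -scalerAl -scalerAr scalerA mulrC.
Qed.

Lemma L_eqdeg (F G : seq A -> R^o) s : eqdeg (size s) F G -> L F s = L G s.
Proof.
move=> H; rewrite /bilift; apply: eq_combos => ps Hps.
by rewrite H // size_map.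
Qed.

Lemma L_add (F G : seq A -> R^o) s : L (fun t => F t + G t) s = L F s + L G s.
Proof. by rewrite /bilift -big_split; apply: eq_bigr => ps _; rewrite scalerDl. Qed.

Lemma L_lin (F G : seq A -> R^o) x s : L (fun t => x *: F t + G t) s = x *: L F s + L G s.
Proof.
rewrite /bilift scaler_sumr -big_split; apply: eq_bigr => ps _.
by rewrite scalerDl scalerA.
Qed.

Lemma L_opp (F : seq A -> R^o) s : L (fun t => - F t) s = - L F s.
Proof. by rewrite /bilift -sumrN; apply: eq_bigr => ps _; rewrite scaleNr. Qed.

Lemma L_sub (F G : seq A -> R^o) s : L (fun t => F t - G t) s = L F s - L G s.
Proof. by rewrite L_add L_opp. Qed.

Lemma L_sgn k (F : seq A -> R^o) s : L (fun t => sgn k (F t)) s = sgn k (L F s).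
Proof. rewrite /sgn; case: (odd k) => //; exact: L_opp. Qed.

Lemma L_sum lo hi (F : nat -> seq A -> R^o) s :
  L (fun t => \sum_(lo <= i < hi) F i t) s = \sum_(lo <= i < hi) L (F i) s.
Proof.
rewrite /bilift; under eq_bigr => ps _ do rewrite scaler_suml.
by rewrite exchange_big.
Qed.

Lemma L_zero s : L (@fzero A R^o) s = 0.
Proof. by rewrite /bilift big1 // => ps _; rewrite /fzero scale0r. Qed.


Lemma prod_lin (X1 X2 : seq A) : linF (fun x : A => \prod_(a <- X1 ++ x :: X2) a).
Proof.
move=> x a b; by rewrite !big_cat !big_cons /= mulrDl mulrDr -scalerAl -scalerAr.
Qed.

Lemma linF_mulLR (F : A -> A) (U V : A) : linF F -> linF (fun x => U * (F x * V)).
Proof.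
move=> HF x a b; rewrite HF mulrDl mulrDr -scalerAl -scalerAr //.
Qed.

Lemma linF_comp (M : lmodType R) (G : A -> M) (F : A -> A) :
  linF G -> linF F -> linF (fun x => G (F x)).
Proof. by move=> HG HF x a b; rewrite HF HG. Qed.

Lemma linF_scal_r (G : A -> R^o) (W : A) : linF G -> linF (fun y => G y *: W).
Proof. by move=> HG x a b; rewrite HG scalerDl -scalerA. Qed.

Lemma firstsE (ps : seq (A * A)) : firsts_prod ps = \prod_(a <- map fst ps) a.
Proof. by rewrite /firsts_prod big_map. Qed.
Lemma secsE (ps : seq (A * A)) : secs_prod ps = \prod_(a <- map snd ps) a.
Proof. by rewrite /secs_prod big_map. Qed.

Lemma take_mid (T : Type) (s1 s2 s3 : seq T) :
  take (size s2) (drop (size s1) (s1 ++ s2 ++ s3)) = s2.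
Proof. by rewrite drop_size_cat // take_size_cat. Qed.
Lemma drop_post (T : Type) (s1 s2 s3 : seq T) :
  drop (size s1 + size s2) (s1 ++ s2 ++ s3) = s3.
Proof. by rewrite catA drop_size_cat // size_cat. Qed.
Lemma take_pre (T : Type) (s1 s2 : seq T) : take (size s1) (s1 ++ s2) = s1.
Proof. by rewrite take_size_cat. Qed.

Lemma L_comp_core (m n : nat) (f g : seq A -> R^o) pre mid post :
  multilin m f -> multilin n g -> (size pre + size post).+1 = m -> size mid = n ->
  L (OA_comp cop m n (size pre).+1 f g) (pre ++ mid ++ post)
  = L f (pre ++ L g mid :: post).
Proof.
move=> Hf Hg Hm Hn.
pose Psi (p1 p3 : seq (A * A)) (X Y Z : seq A) : A :=
  g Z *: (f (map snd p1 ++ \prod_(a <- Y) a :: map snd p3) *: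
          (firsts_prod p1 * (\prod_(a <- X) a * firsts_prod p3))).
have Hfl : forall p1 p3 : seq (A * A), size p1 = size pre -> size p3 = size post ->
    linF (fun a => f (map snd p1 ++ a :: map snd p3) : R^o).
  move=> p1 p3 H1 H3; apply: (multilin_lin Hf); by rewrite !size_map H1 H3.
transitivity (\sum_(p1 <- combos cop pre) \sum_(p3 <- combos cop post)
   \sum_(p2 <- combos cop mid) \sum_(q <- combos cop (map snd p2))
      Psi p1 p3 (map fst p2) (map fst q) (map snd q)).
  rewrite /bilift big_combos_cat; apply: eq_combos => p1 Hp1.
  rewrite big_combos_cat exchange_big; apply: eq_combos => p3 Hp3.
  apply: eq_combos => p2 Hp2.
  rewrite /OA_comp !map_cat /=.
  have -> : size pre = size (map snd p1) by rewrite size_map.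
  have -> : n = size (map snd p2) by rewrite size_map Hp2.
  rewrite take_pre take_mid drop_post scaler_suml; apply: eq_bigr => q _.
  rewrite (linFZ (Hfl _ _ Hp1 Hp3)) -scalerA /Psi.
  by rewrite !firsts_cat -!firstsE.
transitivity (\sum_(p1 <- combos cop pre) \sum_(p3 <- combos cop post)
   \sum_(qs <- combos cop mid) \sum_(rs <- combos cop (map fst qs))
      Psi p1 p3 (map fst rs) (map snd rs) (map snd qs)).
  apply: eq_combos => p1 Hp1; apply: eq_combos => p3 Hp3; symmetry.
  apply: coassoc_list; split.
  - move=> X1 X2 Y Z _ _ _; rewrite /Psi.
    apply: linF_scale; apply: linF_scale; apply: linF_mulLR; exact: prod_lin.
  - move=> X Y1 Y2 Z _ _ _; rewrite /Psi.
    apply: linF_scale; apply: linF_scal_r; apply: linF_comp (Hfl _ _ Hp1 Hp3) _.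
    exact: prod_lin.
  - move=> X Y Z1 Z2 _ _ HZ; rewrite /Psi.
    apply: linF_scal_r; apply: (multilin_lin Hg); by rewrite HZ Hn.
symmetry.
set b := L g mid.
rewrite {1}/bilift big_combos_cat; apply: eq_combos => p1 Hp1.
rewrite big_combos_cons exchange_big; apply: eq_combos => p3 Hp3.
pose phi u v := f (map snd p1 ++ v :: map snd p3) *: (firsts_prod p1 * (u * firsts_prod p3)).
have Hphi : bilin phi.
  apply: bilinP => [v|u].
    apply: linF_scale; apply: linF_mulLR; by move=> x a c.
  apply: linF_scal_r; exact: Hfl.
transitivity (swe cop phi b).
  rewrite /swe; apply: eq_bigr => [[u v]] _.
  by rewrite map_cat firsts_cat firsts_cons.
rewrite /b /bilift (linF_sum (swe_lin Hphi)); apply: eq_bigr => qs _.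
rewrite (linFZ (swe_lin Hphi)) firstsE swe_prod // scaler_sumr; apply: eq_bigr => rs _.
by rewrite /Psi /phi !firstsE !secsE.
Qed.


Lemma L_comp (m n i : nat) (f g : seq A -> R^o) (s : seq A) :
  multilin m f -> multilin n g -> (0 < i <= m)%N -> (size s).+1 = (m + n)%N ->
  L (OA_comp cop m n i f g) s = End_comp m n i (L f) (L g) s.
Proof.
move=> Hf Hg /andP[Hi0 Him] Hsz.
have Hs : take i.-1 s ++ take n (drop i.-1 s) ++ drop (i.-1 + n) s = s.
  by rewrite addnC -drop_drop !cat_take_drop.
have Hpre : size (take i.-1 s) = i.-1 by rewrite size_takel //; lia.
have Hmid : size (take n (drop i.-1 s)) = n by rewrite size_takel // size_drop; lia.
have Hpo : size (drop (i.-1 + n) s) = (size s - (i.-1 + n))%N by rewrite size_drop.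
have Hm : (size (take i.-1 s) + size (drop (i.-1 + n) s)).+1 = m.
  rewrite Hpre Hpo; lia.
have H := L_comp_core Hf Hg Hm Hmid.
rewrite Hs Hpre prednK // in H.
Qed.


Lemma End_comp_eqdeg (m n i : nat) (F F' G G' : seq A -> A) (s : seq A) :
  eqdeg m F F' -> eqdeg n G G' -> (0 < i <= m)%N -> (size s).+1 = (m + n)%N ->
  End_comp m n i F G s = End_comp m n i F' G' s.
Proof.
move=> HF HG /andP[Hi0 Him] Hsz; rewrite /End_comp.
have Hmid : size (take n (drop i.-1 s)) = n by rewrite size_takel // size_drop; lia.
rewrite HG // HF // size_cat /= size_takel ?size_drop; lia.
Qed.

Lemma L_odiff n (h : seq A -> R^o) : multilin n h ->
  eqdeg n.+1 (L (odiff OO n h)) (odiff EE n (L h)).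
Proof.
move=> Hh s Hs; rewrite /odiff !L_add L_sgn L_sum.
have Hmu := mu_multilin.
congr (_ + _ + _).
- rewrite L_comp //; last by rewrite Hs.
  apply: End_comp_eqdeg => //; last by rewrite Hs.
  move=> t Ht; exact: L_mu.
- apply: eq_big_nat => i /andP[Hi1 Hi2]; rewrite L_sgn L_comp //; last first.
    by rewrite Hs addn2.
    by rewrite Hi1 -ltnS.
  congr sgn; apply: End_comp_eqdeg => //; last by rewrite Hs addn2.
    move=> t Ht; exact: L_mu.
  by rewrite Hi1 -ltnS.
- rewrite L_comp //; last by rewrite Hs.
  congr sgn; apply: End_comp_eqdeg => //; last by rewrite Hs.
  move=> t Ht; exact: L_mu.
Qed.


Lemma take_splitL (T : Type) k (s1 t1 : seq T) a :
  (k <= size s1)%N -> take k (s1 ++ a :: t1) = take k s1.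
Proof.
move=> H; rewrite take_cat; case: ltnP => // H2.
have -> : k = size s1 by apply/eqP; rewrite eqn_leq H H2.
by rewrite subnn take0 cats0 take_size.
Qed.
Lemma take_splitR (T : Type) k (s1 t1 : seq T) a :
  (size s1 < k)%N -> take k (s1 ++ a :: t1) = s1 ++ a :: take (k - size s1)%N.-1 t1.
Proof.
move=> H; rewrite take_cat ltnNge ltnW //=.
by case E: (k - size s1)%N => [|j] /=; [lia | ].
Qed.
Lemma drop_splitL (T : Type) k (s1 t1 : seq T) a :
  (k <= size s1)%N -> drop k (s1 ++ a :: t1) = drop k s1 ++ a :: t1.
Proof.
move=> H; rewrite drop_cat; case: ltnP => // H2.
have -> : k = size s1 by apply/eqP; rewrite eqn_leq H H2.
by rewrite subnn drop0 drop_size.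
Qed.
Lemma drop_splitR (T : Type) k (s1 t1 : seq T) a :
  (size s1 < k)%N -> drop k (s1 ++ a :: t1) = drop (k - size s1)%N.-1 t1.
Proof.
move=> H; rewrite drop_cat ltnNge ltnW //=.
by case E: (k - size s1)%N => [|j] /=; [lia | ].
Qed.

Lemma linF_ext (M : lmodType R) (F G : A -> M) : (forall a, F a = G a) -> linF G -> linF F.
Proof. by move=> E HG x a b; rewrite !E. Qed.

Lemma comp_multilin (m n i k : nat) (f g : seq A -> R^o) :
  multilin m f -> multilin n g -> (0 < i <= m)%N -> k.+1 = (m + n)%N ->
  multilin k (OA_comp cop m n i f g).
Proof.
move=> Hf Hg /andP[Hi0 Him] Hk s1 t1 x a b Hsz.
suff : linF (fun a => OA_comp cop m n i f g (s1 ++ a :: t1)) by apply.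
rewrite /OA_comp.
case: (ltnP (size s1) i.-1) => H1.
  apply: (linF_ext (G := fun c => \sum_(ps <- combos cop (take n (drop (i.-1 - size s1)%N.-1 t1)))
     f ((s1 ++ c :: take (i.-1 - size s1)%N.-1 t1) ++ (g (map snd ps) *: firsts_prod ps)
          :: drop (i.-1 + n - size s1)%N.-1 t1))).
    move=> c; rewrite take_splitR // !drop_splitR //; lia.
  apply: linF_sum_gen => ps.
  apply: (linF_ext (G := fun c => f (s1 ++ c :: (take (i.-1 - size s1)%N.-1 t1 ++
        (g (map snd ps) *: firsts_prod ps) :: drop (i.-1 + n - size s1)%N.-1 t1)))).
    by move=> c; rewrite -catA.
  apply: (multilin_lin Hf); rewrite size_cat /= size_take_min size_drop; lia.
case: (ltnP (size s1) (i.-1 + n)) => H2.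
  apply: (linF_ext (G := fun c => \sum_(ps <- combos cop (drop i.-1 s1 ++ c ::
       take (n - size (drop i.-1 s1))%N.-1 t1))
     f (take i.-1 s1 ++ (g (map snd ps) *: firsts_prod ps)
          :: drop (i.-1 + n - size s1)%N.-1 t1))).
    move=> c; rewrite take_splitL // drop_splitL // take_splitR ?size_drop; last lia.
    rewrite drop_splitR //; by rewrite size_drop.
  apply: linF_combos_at => p1 p3 Hp1 Hp3.
  apply: bilinP => [v|u].
    apply: (linF_comp (G := fun c => f (take i.-1 s1 ++ c ::
          drop (i.-1 + n - size s1)%N.-1 t1))).
      apply: (multilin_lin Hf); rewrite size_take_min size_drop; lia.
    move=> y c d; rewrite !firsts_cat !firsts_cons !map_cat /=.
    rewrite mulrDl mulrDr -scalerAl -scalerAr scalerDr !scalerA mulrC //.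
  apply: (linF_comp (G := fun c => f (take i.-1 s1 ++ c ::
        drop (i.-1 + n - size s1)%N.-1 t1))).
    apply: (multilin_lin Hf); rewrite size_take_min size_drop; lia.
  move=> y c d; rewrite !map_cat /= (multilin_lin Hg); last first.
    rewrite !size_map Hp1 Hp3 size_drop size_take_min; lia.
  by rewrite !firsts_cat !firsts_cons /= scalerDl -scalerA.
apply: (linF_ext (G := fun c => \sum_(ps <- combos cop (take n (drop i.-1 s1)))
     f ((take i.-1 s1 ++ (g (map snd ps) *: firsts_prod ps) ::
      drop (i.-1 + n) s1) ++ c :: t1))).
  move=> c; rewrite take_splitL; last lia.
  rewrite drop_splitL; last lia.
  rewrite take_splitL ?size_drop; last lia.
  rewrite drop_splitL; last lia.
  by apply: eq_bigr => ps _; rewrite -catA.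
apply: linF_sum_gen => ps.
apply: (multilin_lin Hf); rewrite size_cat /= size_take_min size_drop; lia.
Qed.


Lemma eps_L (f : seq A -> R^o) s : multilin (size s) f -> eps (L f s) = f s.
Proof.
move=> Hf; rewrite /bilift (linF_sum eps_lin) -(counit_list Hf).
apply: eq_bigr => ps _; rewrite (linFZ eps_lin); exact: mulrC.
Qed.

Lemma OA_comp_L (m n i : nat) (F G : seq A -> R^o) (s : seq A) :
  multilin m F -> (0 < i <= m)%N -> (size s).+1 = (m + n)%N ->
  OA_comp cop m n i F G s = F (take i.-1 s ++ L G (take n (drop i.-1 s)) :: drop (i.-1 + n) s).
Proof.
move=> HF /andP[Hi0 Him] Hsz.
rewrite /OA_comp /bilift (linF_sum (multilin_lin HF _)) //.
rewrite size_take_min size_drop; lia.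
Qed.

Lemma eps_sgn k (x : A) : eps (sgn k x) = sgn k (eps x).
Proof. rewrite /sgn; case: (odd k) => //; exact: (linFN eps_lin). Qed.

Lemma eps_multilin n (h : seq A -> A) : multilin n h -> multilin n (fun t => eps (h t) : R^o).
Proof. by move=> Hh s t x a b Hn; rewrite Hh // eps_lin. Qed.

Lemma eps_odiff n (h : seq A -> A) s : multilin n h -> size s = n.+1 ->
  eps (odiff EE n h s) = odiff OO n (fun t => eps (h t)) s.
Proof.
move=> Hh Hs.
have Hh' := eps_multilin Hh.
have Hmu := mu_multilin.
rewrite /odiff !(linFD eps_lin) eps_sgn (linF_sum eps_lin).
congr (_ + _ + _).
- rewrite /= OA_comp_L //; last by rewrite Hs.
  case: s Hs => [|a s] //= [Hs].
  rewrite /End_comp /= take0 drop0 take_oversize ?Hs // !epsM eps_L ?Hs //.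
- apply: eq_big_nat => i /andP[Hi1 Hi2]; rewrite eps_sgn /= OA_comp_L //; last first.
    by rewrite Hs addn2.
    by rewrite Hi1 -ltnS.
  rewrite L_mu ?size_takel // size_drop Hs; lia.
- rewrite /= OA_comp_L //; last by rewrite Hs.
  rewrite /End_comp /= take0 drop0 !epsM eps_L // size_takel // Hs //.
Qed.

Lemma cob_zero k (X : seq A -> A) : eqdeg k X (@fzero A A) -> coboundary EE k X.
Proof.
case: k => [|k] H //=.
exists (@fzero A A); split.
  by move=> s t x a b _; rewrite /fzero scaler0 addr0.
move=> s Hs; rewrite H // /odiff /= /End_comp /fzero /=.
rewrite big1 ?addr0; last by move=> i _; rewrite /sgn; case: odd; rewrite ?oppr0.
case: s Hs => [|a s] //= _.
by rewrite take0 /= mulr0 mul0r add0r /sgn; case: odd; rewrite ?oppr0.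
Qed.

End Main.



Theorem theorem4p2 (R : comPzRingType) (A : algType R)
  (cop : A -> seq (A * A)) (eps : A -> R) :
  is_bialgebra cop eps ->
  let O := OA cop eps in
  let E := EndA A in
  let L := bilift cop in
  (forall (n : nat) (f g : seq A -> R^o) (x : R),
      multilin n f -> multilin n g ->
      multilin n (L f) /\
      eqdeg n (L (fun s => x *: f s + g s)) (fun s => x *: L f s + L g s)) /\
  (forall (n : nat) (f : seq A -> R^o), cocycle O n f -> cocycle E n (L f)) /\
  (forall (n : nat) (f : seq A -> R^o),
      multilin n f -> coboundary O n f -> coboundary E n (L f)) /\
  (forall (n : nat) (f : seq A -> R^o),
      cocycle O n f -> coboundary E n (L f) -> coboundary O n f) /\
  eqdeg 0 (L (oe O)) (oe E) /\
  (forall (m n : nat) (f g : seq A -> R^o),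
      cocycle O m f -> cocycle O n g ->
      coboundary E (m + n)
        (fsub (L (ocup O m n f g)) (ocup E m n (L f) (L g)))) /\
  (forall (m n : nat) (f g : seq A -> R^o),
      cocycle O m f -> cocycle O n g ->
      coboundary E (m + n).-1
        (fsub (L (obracket O m n f g)) (obracket E m n (L f) (L g)))).
Proof.
move=> Hbi; cbv zeta.
have Hmu := mu_multilin Hbi.
split; [|split; [|split; [|split; [|split; [|split]]]]].
- move=> n f g x Hf Hg; split; first exact: (L_multilin Hbi Hf).
  move=> s _; exact: L_lin.
- move=> n f [Hf Hd]; split; first exact: (L_multilin Hbi Hf).
  move=> s Hs; rewrite -(L_odiff Hbi Hf Hs).
  have := L_eqdeg cop (s := s) (F := odiff (OA cop eps) n f) (G := @fzero A R^o).
  rewrite Hs => /(_ Hd) ->; exact: L_zero.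
- move=> [|n] f Hf /=.
    move=> H0 s Hs.
    have := L_eqdeg cop (s := s) (F := f) (G := @fzero A R^o).
    rewrite Hs => /(_ H0) ->; exact: L_zero.
  case=> h [Hh Hd]; exists (bilift cop h); split; first exact: (L_multilin Hbi Hh).
  move=> s Hs; rewrite -(L_odiff Hbi Hh Hs).
  have := L_eqdeg cop (s := s) (F := f) (G := odiff (OA cop eps) n h).
  by rewrite Hs => /(_ Hd) ->.
- move=> [|n] f [Hf _] /=.
    move=> H s Hs; rewrite -(eps_L Hbi (f := f) (s := s)) ?Hs // H // /fzero.
    exact: (linF0 (eps_lin Hbi)).
  case=> h [Hh Hd]; exists (fun t => eps (h t)); split; first exact: (eps_multilin Hbi Hh).
  move=> s Hs; rewrite -(eps_L Hbi (f := f) (s := s)) ?Hs // Hd //.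
  exact: (eps_odiff Hbi).
- move=> s /size0nil ->.
  by rewrite /bilift big_combos_nil firsts_nil /= scale1r.
- move=> m n f g [Hf _] [Hg _]; apply: cob_zero => s Hs.
  have Hs' : size s = (m + n)%N := Hs.
  rewrite /fsub /fzero; apply/eqP; rewrite subr_eq0; apply/eqP.
  rewrite /ocup /=.
  have Hin : multilin m.+1 (OA_comp cop 2 m 1 (omu (OA cop eps)) f).
    exact: (comp_multilin Hbi Hmu Hf).
  rewrite (L_comp Hbi Hin Hg) ?leqnn ?Hs' //.
  apply: End_comp_eqdeg; rewrite ?leqnn ?Hs' //.
  move=> t Ht; rewrite (L_comp Hbi Hmu Hf) //; last by rewrite Ht.
  apply: End_comp_eqdeg => //; last by rewrite Ht.
  move=> u Hu; exact: (L_mu Hbi).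
- move=> m n f g [Hf _] [Hg _]; apply: cob_zero => s Hs.
  have Hs' : size s = (m + n)%N.-1 := Hs.
  rewrite /fsub /fzero; apply/eqP; rewrite subr_eq0; apply/eqP.
  rewrite /obracket /obarcomp L_sub !L_sgn !L_sum.
  congr (sgn _ _ - sgn _ (sgn _ _)).
    apply: eq_big_nat => i /andP[Hi1 Hi2]; rewrite L_sgn (L_comp Hbi Hf Hg) //; last lia.
    by rewrite Hi1 -ltnS.
  apply: eq_big_nat => i /andP[Hi1 Hi2]; rewrite L_sgn (L_comp Hbi Hg Hf) //; last lia.
  by rewrite Hi1 -ltnS.
Qed.
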